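(* Let $n\ge1$, $1\le k\le n$, $\ell\ge1$, $r:=n(n+1)/2$, $\Sigma\in\mathbb{S}^n$, and let $\tilde\varphi$ be the single-layer objective described in the context. Let $D>0$ and $$\mathcal{D}:=\{(A,b,C,d)\in\mathbb{R}^{\ell\times r}\times\mathbb{R}^\ell\times\mathbb{R}^{nk\times\ell}\times\mathbb{R}^{nk}: \|(A,b,C,d)\|\le D\}.$$ Then the function $\Theta=(A,b,C,d)\mapsto \frac{\partial\tilde\varphi(\Theta)}{\partial b}\in\mathbb{R}^\ell$ is Lipschitz continuous on $\mathcal{D}$ with a constant $L_b$ for which $$L_b^2=\mathcal{C}_b\, n^2D^2\max\{\ell D^2L_Z^2,\ \ell^2D^6L_Z^2,\ \ell^3D^4,\ n\ell\},$$ where $L_Z:=\sqrt{1+\|\Sigma\|_S^2}$ and $\mathcal{C}_b$ is a constant that only depends polynomially on $\sigma'_{\max},\sigma''_{\max},\mu''_{\max}$.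
   Context: $\mathbb{S}^n$ denotes the real symmetric $n\times n$ matrices. $h:\mathbb{S}^n\to\mathbb{R}^{n(n+1)/2}$, $h(\Sigma)=(\Sigma_{1,1},\dots,\Sigma_{1,n},\Sigma_{2,2},\dots,\Sigma_{2,n},\dots,\Sigma_{n,n})^T$, and $\|\Sigma\|_S:=\|h(\Sigma)\|$ (Euclidean norm). $g:\mathbb{R}^{nk}\to\mathbb{R}^{n\times k}$ maps $v$ to $W$ with $W_{i,j}=v_{(i-1)k+j}$. The activation $\sigma:\mathbb{R}\to[-1,1]$ is twice differentiable with $|\sigma'|\le\sigma'_{\max}$ ($\sigma'_{\max}>0$) and $|\sigma''|\le\sigma''_{\max}$; $\tilde\sigma(u):=(\sigma(u_1),\dots,\sigma(u_\ell))^T$. $\mu:\mathbb{R}\to\mathbb{R}$ is smooth with $|\mu'|\le1$, $|\mu''|\le\mu''_{\max}$. For $\Theta=(A,b,C,d)$ with $A\in\mathbb{R}^{\ell\times r}$, $b\in\mathbb{R}^\ell$, $C\in\mathbb{R}^{nk\times\ell}$, $d\in\mathbb{R}^{nk}$, the single-layer network is $\mathcal{N}^\Theta(x):=C\tilde\sigma(Ax+b)+d$, and with $M_\Theta:=g(\mathcal{N}^\Theta(h(\Sigma)))$, $\tilde\varphi(\Theta):=\sum_{i,j=1}^n\mu\big([M_\Theta M_\Theta^T-\Sigma]_{i,j}\big)$. The norm of a list of matrices is $\|(X^1,\dots,X^\gamma)\|:=(\sum_i\|X^i\|_F^2)^{1/2}$, and Lipschitz continuity is with respect to this norm on parameters and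 the Euclidean norm on $\mathbb{R}^\ell$. *)

(* Defs.v *)
From HB Require Import structures.
From mathcomp Require Import all_boot all_order all_algebra.
From mathcomp Require Import all_classical all_reals all_analysis.
Set Implicit Arguments. Unset Strict Implicit. Unset Printing Implicit Defensive.
Import Order.TTheory GRing.Theory Num.Theory.
Import numFieldNormedType.Exports.
Local Open Scope ring_scope.

Section Defs.
Variable R : realType.

Definition fro2 (m p : nat) (X : 'M[R]_(m, p)) : R :=
  \sum_(i < m) \sum_(j < p) X i j ^+ 2.

(* entry (i,j) of a matrix accessed with nat indices (0 outside the range) *)
Definition getmx (m p : nat) (X : 'M[R]_(m, p)) (i j : nat) : R :=
  match @insub nat (fun a => a < m)%N 'I_m i, @insub nat (fun a => a < p)%N 'I_p j with
  | Some a, Some b => X a b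
  | _, _ => 0
  end.

(* the (0-based) index pairs (i,j), i <= j, in the order of h:
   (0,0),(0,1),...,(0,n-1),(1,1),...,(n-1,n-1) *)
Definition hidx (n : nat) : seq (nat * nat) :=
  flatten [seq [seq (i, j) | j <- iota i (n - i)] | i <- iota 0 n].

Definition hvec (n : nat) (S : 'M[R]_n) : 'cV[R]_((n * n.+1)./2) :=
  \col_(p < (n * n.+1)./2)
    getmx S (nth (0, 0)%N (hidx n) p).1 (nth (0, 0)%N (hidx n) p).2.

Definition normS (n : nat) (S : 'M[R]_n) : R := Num.sqrt (fro2 (hvec S)).

Definition gmat (n k : nat) (v : 'cV[R]_(n * k)) : 'M[R]_(n, k) :=
  \matrix_(i < n, j < k) getmx v (i * k + j)%N 0%N.

Definition net (r l m : nat) (sigma : R -> R) (A : 'M[R]_(l, r)) (b : 'cV[R]_l)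
  (C : 'M[R]_(m, l)) (d : 'cV[R]_m) (x : 'cV[R]_r) : 'cV[R]_m :=
  C *m map_mx sigma (A *m x + b) + d.

Definition phit (n k l : nat) (S : 'M[R]_n) (sigma mu : R -> R)
  (A : 'M[R]_(l, (n * n.+1)./2)) (b : 'cV[R]_l)
  (C : 'M[R]_(n * k, l)) (d : 'cV[R]_(n * k)) : R :=
  let M := @gmat n k (net sigma A b C d (hvec S)) in
  \sum_(i < n) \sum_(j < n) mu ((M *m M^T - S) i j).

Definition gradb (n k l : nat) (S : 'M[R]_n) (sigma mu : R -> R)
  (A : 'M[R]_(l, (n * n.+1)./2)) (b : 'cV[R]_l)
  (C : 'M[R]_(n * k, l)) (d : 'cV[R]_(n * k)) : 'cV[R]_l :=
  \col_(i < l) derive1 (fun t : R => @phit n k l S sigma mu A (b + t *: delta_mx i 0) C d) 0.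

Definition pnorm (r l m : nat) (A : 'M[R]_(l, r)) (b : 'cV[R]_l)
  (C : 'M[R]_(m, l)) (d : 'cV[R]_m) : R :=
  Num.sqrt (fro2 A + fro2 b + fro2 C + fro2 d).

Definition vnorm (l : nat) (v : 'cV[R]_l) : R := Num.sqrt (fro2 v).

Definition eval3 (P : {poly {poly {poly R}}}) (x y z : R) : R :=
  ((P.[(x%:P)%:P]).[y%:P]).[z].

Definition smooth (f : R -> R) : Prop :=
  forall (m : nat) (x : R), derivable (iter m (@derive1 R R) f) x 1.

End Defs.

(* Main.v *)
Require Import Defs.
From HB Require Import structures.
From mathcomp Require Import all_boot all_order all_algebra.
From mathcomp Require Import all_classical all_reals all_analysis.
From mathcomp Require Import ring lra zify.
Import Order.TTheory GRing.Theory Num.Theory.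
Import numFieldNormedType.Exports.
Local Open Scope ring_scope.
Unset Implicit Arguments.

Section Fro.
Variable R : realType.

Lemma fro2_ge0 m p (X : 'M[R]_(m,p)) : 0 <= fro2 X.
Proof. by apply: sumr_ge0 => i _; apply: sumr_ge0 => j _; exact: sqr_ge0. Qed.

Lemma dsum_mul (I J : finType) (f : I -> R) (g : J -> R) :
  (\sum_i f i) * (\sum_j g j) = \sum_i \sum_j f i * g j.
Proof. rewrite mulr_suml; apply: eq_bigr => i _; by rewrite mulr_sumr. Qed.

Lemma CS (I : finType) (a b : I -> R) :
  (\sum_i a i * b i) ^+ 2 <= (\sum_i a i ^+ 2) * (\sum_i b i ^+ 2).
Proof.
have H : 0 <= \sum_i \sum_j (a i * b j - a j * b i) ^+ 2.
  by apply: sumr_ge0 => i _; apply: sumr_ge0 => j _; exact: sqr_ge0.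
have E : \sum_i \sum_j (a i * b j - a j * b i) ^+ 2 =
   (\sum_i a i ^+ 2) * (\sum_i b i ^+ 2) + (\sum_i b i ^+ 2) * (\sum_i a i ^+ 2)
   - 2 * (\sum_i a i * b i) ^+ 2.
  rewrite expr2 !dsum_mul mulr_sumr -!big_split -sumrB /=.
  apply: eq_bigr => i _; rewrite mulr_sumr -!big_split -sumrB /=.
  apply: eq_bigr => j _; ring.
rewrite E in H; lra.
Qed.


Lemma sq_le_abs (x c : R) : `|x| <= c -> x ^+ 2 <= c ^+ 2.
Proof. rewrite ler_norml => /andP[h1 h2]; nra. Qed.

Lemma fro2_entry3 m p (X Y Z W : 'M[R]_(m,p)) a b c :
  (forall i j, X i j ^+ 2 <= a * Y i j ^+ 2 + b * Z i j ^+ 2 + c * W i j ^+ 2) ->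
  fro2 X <= a * fro2 Y + b * fro2 Z + c * fro2 W.
Proof.
move=> H; rewrite /fro2 !mulr_sumr -!big_split /=.
apply: ler_sum => i _; rewrite !mulr_sumr -!big_split /=.
by apply: ler_sum => j _; apply: H.
Qed.

Lemma fro2_entry1 m p (X Y : 'M[R]_(m,p)) a :
  (forall i j, X i j ^+ 2 <= a * Y i j ^+ 2) -> fro2 X <= a * fro2 Y.
Proof.
move=> H; have := @fro2_entry3 m p X Y 0 0 a 0 0.
rewrite !mul0r !addr0; apply => i j; rewrite !mxE !mul0r !addr0; exact: H.
Qed.

Lemma fro2_add2 m p (X Y : 'M[R]_(m,p)) : fro2 (X + Y) <= 2 * fro2 X + 2 * fro2 Y.
Proof.
have := @fro2_entry3 m p (X + Y) X Y 0 2 2 0.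
rewrite mul0r addr0; apply => i j; rewrite !mxE.
have := sqr_ge0 (X i j - Y i j); nra.
Qed.

Lemma fro2_add3 m p (X Y Z : 'M[R]_(m,p)) :
  fro2 (X + Y + Z) <= 3 * fro2 X + 3 * fro2 Y + 3 * fro2 Z.
Proof.
apply: fro2_entry3 => i j; rewrite !mxE.
have := sqr_ge0 (X i j - Y i j); have := sqr_ge0 (Y i j - Z i j).
have := sqr_ge0 (X i j - Z i j); nra.
Qed.

Lemma fro2_opp m p (X : 'M[R]_(m,p)) : fro2 (- X) = fro2 X.
Proof. by apply: eq_bigr => i _; apply: eq_bigr => j _; rewrite mxE sqrrN. Qed.

Lemma fro2_tr m p (X : 'M[R]_(m,p)) : fro2 X^T = fro2 X.
Proof.
rewrite /fro2 exchange_big; apply: eq_bigr => i _; apply: eq_bigr => j _.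
by rewrite mxE.
Qed.

Lemma fro2_mul m p q (A : 'M[R]_(m,p)) (B : 'M[R]_(p,q)) :
  fro2 (A *m B) <= fro2 A * fro2 B.
Proof.
rewrite /fro2 mulr_suml; apply: ler_sum => i _.
rewrite [X in _ <= _ * X]exchange_big mulr_sumr; apply: ler_sum => j _.
rewrite mxE; exact: CS.
Qed.

Lemma fro2_bound m p (X : 'M[R]_(m,p)) (c : R) :
  (forall i j, `|X i j| <= c) -> fro2 X <= c ^+ 2 * m%:R * p%:R.
Proof.
move=> H; rewrite /fro2.
have -> : c ^+ 2 * m%:R * p%:R = \sum_(i < m) \sum_(j < p) c ^+ 2.
  rewrite !sumr_const !card_ord -mulrnA -[RHS]mulr_natr natrM.
  by rewrite [p%:R * _]mulrC mulrA.
apply: ler_sum => i _; apply: ler_sum => j _; exact: sq_le_abs.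
Qed.

Lemma fro2_had l (x y : 'cV[R]_l) :
  fro2 (\col_i (x i 0 * y i 0)) <= fro2 x * fro2 y.
Proof.
rewrite /fro2 mulr_suml; apply: ler_sum => i _; rewrite !big_ord1 mxE.
rewrite exprMn; apply: ler_wpM2l; first exact: sqr_ge0.
rewrite (bigD1 i) //= big_ord1 lerDl; apply: sumr_ge0 => j _.
by rewrite big_ord1 sqr_ge0.
Qed.

Lemma fro2_had_bound l (x y : 'cV[R]_l) (c : R) :
  (forall i, `|x i 0| <= c) -> fro2 (\col_i (x i 0 * y i 0)) <= c ^+ 2 * fro2 y.
Proof.
move=> H; apply: fro2_entry1 => i j; rewrite mxE ord1 exprMn.
apply: ler_wpM2r; first exact: sqr_ge0.
exact: sq_le_abs.
Qed.

End Fro.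

Arguments fro2_ge0 {R m p} X.
Arguments sq_le_abs {R x c}.
Arguments fro2_entry1 {R m p X Y a}.
Arguments fro2_entry3 {R m p X Y Z W a b c}.
Arguments fro2_add2 {R m p} X Y.
Arguments fro2_add3 {R m p} X Y Z.
Arguments fro2_opp {R m p} X.
Arguments fro2_tr {R m p} X.
Arguments fro2_mul {R m p q} A B.
Arguments fro2_bound {R m p X c}.
Arguments fro2_had {R l} x y.
Arguments fro2_had_bound {R l x} y {c}.

Set Implicit Arguments. Unset Strict Implicit. Unset Printing Implicit Defensive.

Section Idx.
Variable R : realType.

Lemma getmx_ord m p (X : 'M[R]_(m,p)) (a : 'I_m) (b : 'I_p) : getmx X a b = X a b.
Proof.
rewrite /getmx; case: insubP => [a' _ ha|]; last by rewrite ltn_ord.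
case: insubP => [b' _ hb|]; last by rewrite ltn_ord.
by congr (X _ _); apply: val_inj.
Qed.

Lemma getmx_out m p (X : 'M[R]_(m,p)) a b : (m <= a)%N || (p <= b)%N -> getmx X a b = 0.
Proof.
rewrite /getmx; case: insubP => [a' ha _|//]; case: insubP => [b' hb _|//].
by rewrite leqNgt ha leqNgt hb.
Qed.

Lemma getmxD m p (X Y : 'M[R]_(m,p)) a b : getmx (X + Y) a b = getmx X a b + getmx Y a b.
Proof.
rewrite /getmx; case: insubP => [a' _ _|_]; last by rewrite addr0.
case: insubP => [b' _ _|_]; last by rewrite addr0.
by rewrite mxE.
Qed.

Lemma getmxN m p (X : 'M[R]_(m,p)) a b : getmx (- X) a b = - getmx X a b.
Proof.
rewrite /getmx; case: insubP => [a' _ _|_]; last by rewrite oppr0.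
case: insubP => [b' _ _|_]; last by rewrite oppr0.
by rewrite mxE.
Qed.

Lemma getmxB m p (X Y : 'M[R]_(m,p)) a b : getmx (X - Y) a b = getmx X a b - getmx Y a b.
Proof. by rewrite getmxD getmxN. Qed.

Lemma sum_nat_split n k (g : nat -> R) :
  \sum_(0 <= a < n * k) g a = \sum_(0 <= p < n) \sum_(0 <= j < k) g (p * k + j)%N.
Proof.
elim: n => [|n IH]; first by rewrite mul0n !big_geq.
rewrite big_nat_recr //= -IH mulSnr (@big_cat_nat _ _ _ (n * k)) //=; last by rewrite leq_addr.
congr (_ + _).
rewrite -{1}[(n * k)%N]add0n big_addn (addnC (n * k)) addnK.
by apply: eq_bigr => j _; rewrite addnC.
Qed.

Lemma sum_ord_split n k (g : nat -> R) :
  \sum_(a < n * k) g a = \sum_(p < n) \sum_(j < k) g (p * k + j)%N.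
Proof.
rewrite -(big_mkord xpredT g) sum_nat_split big_mkord.
by apply: eq_bigr => p _; rewrite big_mkord.
Qed.

Lemma fro2_gmat n k (v : 'cV[R]_(n * k)) : fro2 (@gmat R n k v) = fro2 v.
Proof.
rewrite /fro2.
have -> : \sum_(a < n * k) \sum_(j < 1) v a j ^+ 2 = \sum_(a < n * k) getmx v a 0 ^+ 2.
  by apply: eq_bigr => a _; rewrite big_ord1 -(getmx_ord v a ord0).
rewrite (sum_ord_split n k (fun a => getmx v a 0 ^+ 2)).
by apply: eq_bigr => p _; apply: eq_bigr => j _; rewrite mxE.
Qed.

Definition yv n k l (C : 'M[R]_(n * k, l)) (W : 'M[R]_(n, k)) : 'cV[R]_l :=
  \col_i \sum_(p < n) \sum_(j < k) getmx C (p * k + j)%N i * W p j.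

Lemma fro2_yv n k l (C : 'M[R]_(n * k, l)) (W : 'M[R]_(n, k)) :
  fro2 (yv C W) <= fro2 C * fro2 W.
Proof.
rewrite /fro2 [X in _ <= X * _]exchange_big /= mulr_suml. apply: ler_sum => i _.
rewrite big_ord1 mxE.
have -> : \sum_(a < n * k) C a i ^+ 2 = \sum_(p < n) \sum_(j < k) getmx C (p * k + j)%N i ^+ 2.
  rewrite -(sum_ord_split n k (fun a => getmx C a i ^+ 2)).
  by apply: eq_bigr => a _; rewrite getmx_ord.
rewrite !pair_big /=; exact: CS.
Qed.

Lemma yvB n k l (C1 C2 : 'M[R]_(n * k, l)) (W1 W2 : 'M[R]_(n, k)) :
  yv C1 W1 - yv C2 W2 = yv (C1 - C2) W1 + yv C2 (W1 - W2).
Proof.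
apply/matrixP => i j; rewrite !mxE -!sumrB -big_split /=; apply: eq_bigr => p _.
rewrite -!sumrB -big_split /=; apply: eq_bigr => q _.
rewrite getmxB !mxE; ring.
Qed.

End Idx.

Set Implicit Arguments. Unset Strict Implicit. Unset Printing Implicit Defensive.

Section Calc.
Variable R : realType.
Implicit Types (f g : R -> R) (x : R).

Lemma D_cst (c x : R) : is_derive x 1 (fun _ : R => c) 0.
Proof. exact: is_derive_cst. Qed.

Lemma D_id x : is_derive x 1 (fun t : R => t) 1.
Proof. exact: is_derive_id. Qed.

Lemma D_add f g x df dg : is_derive x 1 f df -> is_derive x 1 g dg ->
  is_derive x 1 (fun t => f t + g t) (df + dg).
Proof. move=> Hf Hg; exact: (is_deriveD Hf Hg). Qed.

Lemma D_mul f g x df dg : is_derive x 1 f df -> is_derive x 1 g dg ->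
  is_derive x 1 (fun t => f t * g t) (df * g x + f x * dg).
Proof.
move=> Hf Hg; have := is_deriveM Hf Hg => H.
have -> : (fun t => f t * g t) = (f * g)%R by apply/funext => t.
eapply is_derive_eq; [exact H|].
rewrite /GRing.scale /=; ring.
Qed.

Lemma D_comp f g x df dg : is_derive x 1 g dg -> is_derive (g x) 1 f df ->
  is_derive x 1 (fun t => f (g t)) (df * dg).
Proof. move=> Hg Hf; exact: (is_derive1_comp Hf Hg). Qed.

Lemma D_sum n (h : 'I_n -> R -> R) x (dh : 'I_n -> R) :
  (forall m, is_derive x 1 (h m) (dh m)) ->
  is_derive x 1 (fun t => \sum_(m < n) h m t) (\sum_(m < n) dh m).
Proof. move=> H; have := is_derive_sum H; by rewrite fct_sumE. Qed.

Lemma D_fun f x : derivable f x 1 -> is_derive x 1 f (derive1 f x).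
Proof. by move=> H; rewrite derive1E; apply: derivableP. Qed.

Lemma derive1_val f x df : is_derive x 1 f df -> derive1 f x = df.
Proof. by move=> H; rewrite derive1E derive_val. Qed.

End Calc.

Set Implicit Arguments. Unset Strict Implicit. Unset Printing Implicit Defensive.

Section Grad.
Variable R : realType.

Lemma getmx_nat m p (X : 'M[R]_(m,p)) a b (ha : (a < m)%N) (hb : (b < p)%N) :
  getmx X a b = X (Ordinal ha) (Ordinal hb).
Proof. exact: (getmx_ord X (Ordinal ha) (Ordinal hb)). Qed.

Lemma getmx_net r l m (sigma : R -> R) (A : 'M[R]_(l, r)) b (C : 'M[R]_(m, l)) d z (a : nat) :
  getmx (net sigma A b C d z) a 0 =
  \sum_(j < l) getmx C a j * sigma ((A *m z + b) j 0) + getmx d a 0.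
Proof.
case: (ltnP a m) => h.
  rewrite !(getmx_nat _ h (ltn0Sn 0)) /net !mxE; congr (_ + _).
  apply: eq_bigr => j _; rewrite (getmx_nat _ h (ltn_ord j)) !mxE.
  by congr (C _ _ * _); apply: val_inj.
rewrite !getmx_out ?h // big1 ?addr0 // => j _.
by rewrite getmx_out ?h // mul0r.
Qed.


Lemma alg_ident n k (F : 'I_n -> 'I_n -> R) (M c : 'I_n -> 'I_k -> R) (s : R) :
  \sum_p \sum_q F p q * \sum_j (c p j * s * M q j + M p j * (c q j * s)) =
  s * \sum_p \sum_j c p j * \sum_q (F p q + F q p) * M q j.
Proof.
transitivity (\sum_p \sum_q \sum_j (F p q * c p j * s * M q j) +
              \sum_p \sum_q \sum_j (F p q * M p j * c q j * s)).
  rewrite -big_split; apply: eq_bigr => p _; rewrite -big_split; apply: eq_bigr => q _.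
  rewrite mulr_sumr -big_split; apply: eq_bigr => j _ /=; ring.
rewrite [X in _ + X]exchange_big /= -big_split mulr_sumr; apply: eq_bigr => p _ /=.
rewrite exchange_big [X in _ + X]exchange_big /= -big_split mulr_sumr.
apply: eq_bigr => j _ /=; rewrite -big_split !mulr_sumr; apply: eq_bigr => q _ /=; ring.
Qed.

Lemma gradb_eq n k l (S : 'M[R]_n) (sigma mu : R -> R)
  (A : 'M[R]_(l, (n * n.+1)./2)) (b : 'cV[R]_l) (C : 'M[R]_(n * k, l)) (d : 'cV[R]_(n * k)) :
  (forall x, derivable sigma x 1) -> (forall x, derivable mu x 1) ->
  let u := A *m hvec S + b in
  let M := gmat (net sigma A b C d (hvec S)) in
  let F := map_mx (derive1 mu) (M *m M^T - S) in
  let W := (F + F^T) *m M in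
  gradb S sigma mu A b C d = \col_i (derive1 sigma (u i 0) * yv C W i 0).
Proof.
move=> dsig dmu u M F W.
apply/matrixP => i j0; rewrite ord1 [LHS]mxE.
pose del := fun (m : 'I_l) => (delta_mx i 0 : 'cV[R]_l) m 0.
pose g := fun (p : 'I_n) (j : 'I_k) (t : R) => \sum_(m < l) getmx C (p * k + j)%N m *
   sigma (u m 0 + t * del m) + getmx d (p * k + j)%N 0.
have Ephit : (fun t => phit S sigma mu A (b + t *: delta_mx i 0) C d) =
  (fun t => \sum_(p < n) \sum_(q < n) mu (\sum_(j < k) g p j t * g q j t + - S p q)).
  apply/funext => t; rewrite /phit; apply: eq_bigr => p _; apply: eq_bigr => q _.
  congr mu; rewrite !mxE; congr (_ - _); apply: eq_bigr => j _.
  rewrite !mxE !getmx_net /g; congr (( _ + _) * (_ + _)).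
    by apply: eq_bigr => m _; rewrite /del !mxE addrA.
  by apply: eq_bigr => m _; rewrite /del !mxE addrA.
pose G := fun (p : 'I_n) (j : 'I_k) => getmx C (p * k + j)%N i * derive1 sigma (u i 0).
have Dg p j : is_derive (0 : R) 1 (g p j) (G p j).
  eapply is_derive_eq.
    apply: D_add.
    apply: D_sum => m; apply: D_mul.
    apply: D_comp; last exact: D_fun.
  rewrite /= addr0 (bigD1 i) //= big1 ?addr0.
    rewrite /del !mxE !eqxx /= /G /u !mxE.
    by rewrite scale0r scale1r !(mul0r, mulr0, addr0, add0r, mul1r, mulr1).
  move=> m /negbTE hm; rewrite /del !mxE hm /= /GRing.scale /=.
  by rewrite !(mul0r, mulr0, addr0, add0r, mul1r, mulr1).
have g0 p j : g p j 0 = M p j.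
  rewrite /g !mxE getmx_net; congr (_ + _); apply: eq_bigr => m _.
  by rewrite mul0r addr0.
clearbody u M.
rewrite Ephit (derive1_val (_ : is_derive _ _ _ (\sum_(p < n) \sum_(q < n)
   (derive1 mu ((M *m M^T - S) p q) * (\sum_(j < k) (G p j * M q j + M p j * G q j)))))).
  rewrite mxE /yv mxE.
  have EW p j : W p j = \sum_(q < n) (derive1 mu ((M *m M^T - S) p q) +
      derive1 mu ((M *m M^T - S) q p)) * M q j.
    by rewrite /W mxE; apply: eq_bigr => q _; rewrite !mxE.
  rewrite [X in _ = _ * X](eq_bigr (fun p : 'I_n => \sum_(j < k) getmx C (p * k + j)%N i *
     \sum_(q < n) (derive1 mu ((M *m M^T - S) p q) +
      derive1 mu ((M *m M^T - S) q p)) * M q j)); last first.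
    by move=> p _; apply: eq_bigr => j _; rewrite EW.
  exact: (alg_ident (fun p q => derive1 mu ((M *m M^T - S) p q)) (fun p j => M p j)
     (fun p j => getmx C (p * k + j)%N i) (derive1 sigma (u i 0))).
eapply is_derive_eq.
  apply: D_sum => p; apply: D_sum => q; apply: D_comp; last by apply: D_fun; apply: dmu.
  apply: D_add; first by apply: D_sum => j; apply: D_mul; apply: Dg.
rewrite /=; apply: eq_bigr => p _; apply: eq_bigr => q _.
rewrite addr0; congr (derive1 mu _ * _).
  by rewrite !mxE; congr (_ - _); apply: eq_bigr => j _; rewrite !g0 mxE.
by apply: eq_bigr => j _; rewrite !g0 /GRing.scale /=; ring.
Qed.

End Grad.

Set Implicit Arguments. Unset Strict Implicit. Unset Printing Implicit Defensive.

Section Lip.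
Local Open Scope classical_set_scope.
Local Open Scope ring_scope.
Variable R : realType.

Lemma lip_deriv (f : R -> R) (c : R) :
  (forall x, derivable f x 1) -> (forall x, `|derive1 f x| <= c) ->
  forall a b, `|f a - f b| <= c * `|a - b|.
Proof.
move=> df hc.
have key a b : a <= b -> `|f b - f a| <= c * `|b - a|.
  move=> ab.
  have H1 : forall x, x \in `]a, b[%R -> is_derive x 1 f (derive1 f x).
    by move=> x _; apply: D_fun.
  have H2 : {within `[a, b], continuous f}.
    apply/continuous_subspaceT => x.
    exact/differentiable_continuous/derivable1_diffP.
  have [x _ ->] := MVT_segment ab H1 H2.
  rewrite normrM; apply: ler_wpM2r => //.
move=> a b; case: (leP a b) => ab.
  by rewrite distrC [`|a - b|]distrC; apply: key.
by apply: key; apply: ltW.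
Qed.

Definition Pc (K : R) : {poly {poly {poly R}}} :=
  (K%:P%:P%:P) * (1 + 'X ^+ 2 + (('X : {poly {poly R}})%:P) ^+ 2 +
     ((('X : {poly R})%:P)%:P) ^+ 2) ^+ 3.

Lemma eval3_Pc K x y z : eval3 (Pc K) x y z = K * (1 + x ^+ 2 + y ^+ 2 + z ^+ 2) ^+ 3.
Proof.
by rewrite /eval3 /Pc !(hornerE, horner_exp).
Qed.

End Lip.

Lemma eqle (R : realFieldType) (x y : R) : x = y -> x <= y.
Proof. by move=> ->. Qed.

Lemma final_arith (R : realFieldType) (T L N D2 La c Mx asp av aW ay ag : R) :
  0 <= T -> 1 <= L -> 1 <= N -> 0 <= D2 -> 1 <= La -> 1 <= c ->
  L * D2 * La <= Mx -> L ^+ 2 * D2 ^+ 3 * La <= Mx -> L ^+ 3 * D2 ^+ 2 <= Mx -> N * L <= Mx ->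
  asp <= 2 * c * T * La ->
  av <= 6 * c * T * (L + D2 * La) ->
  aW <= av * (2 ^+ 9 * c * D2 ^+ 2 * L ^+ 2 + 8 * N ^+ 2) ->
  ay <= 32 * N ^+ 2 * D2 * L * T + 2 * D2 * aW ->
  ag <= 2 * asp * (16 * N ^+ 2 * D2 ^+ 2 * L) + 2 * c * ay ->
  ag <= 2 ^+ 15 * c ^+ 3 * (N ^+ 2 * D2 * Mx) * T.
Proof.
move=> T0 L1 N1 D0 La1 c1 f1 f2 f3 f4 Hsp Hv HW Hy Hg.
set Y := N ^+ 2 * D2 * Mx.
have N2 : 1 <= N ^+ 2 by rewrite -(expr1n _ 2); apply: lerXn2r => //; rewrite nnegrE; lra.
have N20 : 0 <= N ^+ 2 by lra.
have ND0 : 0 <= N ^+ 2 * D2 by apply: mulr_ge0.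
have Mx0 : 0 <= Mx by apply: le_trans f4; nra.
have Y0 : 0 <= Y by apply: mulr_ge0.
have DMx : D2 * Mx <= Y.
  by rewrite /Y -mulrA ler_peMl // mulr_ge0.
have L0 : 0 <= L by lra.
have La0 : 0 <= La by lra.
have LMx : L <= Mx by apply: le_trans f4; nra.
have m1 : N ^+ 2 * D2 ^+ 2 * L * La <= Y.
  have -> : N ^+ 2 * D2 ^+ 2 * L * La = (N ^+ 2 * D2) * (L * D2 * La) by ring.
  exact: ler_wpM2l.
have m2 : N ^+ 2 * D2 * L <= Y by apply: ler_wpM2l.
have m3 : D2 ^+ 3 * L ^+ 3 <= Y.
  have -> : D2 ^+ 3 * L ^+ 3 = D2 * (L ^+ 3 * D2 ^+ 2) by ring.
  by apply: le_trans DMx; apply: ler_wpM2l.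
have m4 : D2 ^+ 4 * La * L ^+ 2 <= Y.
  have -> : D2 ^+ 4 * La * L ^+ 2 = D2 * (L ^+ 2 * D2 ^+ 3 * La) by ring.
  by apply: le_trans DMx; apply: ler_wpM2l.
have m5 : N ^+ 2 * D2 ^+ 2 * La <= Y.
  have -> : N ^+ 2 * D2 ^+ 2 * La = (N ^+ 2 * D2) * (D2 * La) by ring.
  apply: ler_wpM2l => //; apply: le_trans f1.
  have -> : L * D2 * La = L * (D2 * La) by ring.
  by rewrite ler_peMl // mulr_ge0.
set Q := 2 ^+ 9 * c * D2 ^+ 2 * L ^+ 2 + 8 * N ^+ 2.
have Q0 : 0 <= Q by rewrite /Q; apply: addr_ge0; [rewrite !mulr_ge0 //; lra | lra].
set E := D2 * (L + D2 * La) * Q.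
have EE : E = 2 ^+ 9 * c * (D2 ^+ 3 * L ^+ 3 + D2 ^+ 4 * La * L ^+ 2) +
              8 * (N ^+ 2 * D2 * L + N ^+ 2 * D2 ^+ 2 * La).
  by rewrite /E /Q; ring.
have cY : c * (D2 ^+ 3 * L ^+ 3 + D2 ^+ 4 * La * L ^+ 2) <= c * (2 * Y).
  apply: ler_wpM2l; lra.
have Eb : E <= (2 ^+ 10 * c + 16) * Y by rewrite EE; lra.
have e1 : 2 * asp * (16 * N ^+ 2 * D2 ^+ 2 * L) <= 64 * c * T * Y.
  have K0 : 0 <= 16 * N ^+ 2 * D2 ^+ 2 * L by rewrite !mulr_ge0 //; lra.
  have := ler_wpM2r K0 Hsp.
  have : c * T * (N ^+ 2 * D2 ^+ 2 * L * La) <= c * T * Y.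
    by apply: ler_wpM2l => //; apply: mulr_ge0; lra.
  move=> h1 h2; apply: le_trans (_ : 2 * (2 * c * T * La * (16 * N ^+ 2 * D2 ^+ 2 * L)) <= _).
    lra.
  have -> : 2 * (2 * c * T * La * (16 * N ^+ 2 * D2 ^+ 2 * L)) =
            64 * (c * T * (N ^+ 2 * D2 ^+ 2 * L * La)) by ring.
  lra.
have e2 : 2 * D2 * aW <= 12 * c * T * E.
  have hv : av * Q <= 6 * c * T * (L + D2 * La) * Q by apply: ler_wpM2r.
  have h : 2 * D2 * aW <= 2 * D2 * (6 * c * T * (L + D2 * La) * Q).
    apply: ler_wpM2l; [lra | exact: le_trans HW hv].
  apply: le_trans h _; apply: eqle; rewrite /E; ring.
have e3 : c * T * E <= c * T * ((2 ^+ 10 * c + 16) * Y) by apply: ler_wpM2l => //; apply: mulr_ge0; lra.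
have e4 : 2 * c * ay <= 64 * c * T * Y + 24 * c * (c * T * E).
  have h : 2 * c * ay <= 2 * c * (32 * N ^+ 2 * D2 * L * T + 12 * c * T * E).
    apply: ler_wpM2l; lra.
  apply: le_trans h _.
  have h2 : c * T * (N ^+ 2 * D2 * L) <= c * T * Y by apply: ler_wpM2l => //; apply: mulr_ge0; lra.
  have -> : 2 * c * (32 * N ^+ 2 * D2 * L * T + 12 * c * T * E) =
     64 * (c * T * (N ^+ 2 * D2 * L)) + 24 * c * (c * T * E) by ring.
  have -> : 64 * c * T * Y = 64 * (c * T * Y) by ring.
  lra.
have e5 : 24 * c * (c * T * E) <= 24 * c * (c * T * ((2 ^+ 10 * c + 16) * Y)).
  apply: ler_wpM2l => //; lra.
have TY0 : 0 <= T * Y by apply: mulr_ge0.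
have fin : 128 * c * T * Y + 24 * c * (c * T * ((2 ^+ 10 * c + 16) * Y)) <= 2 ^+ 15 * c ^+ 3 * Y * T.
  have -> : 128 * c * T * Y + 24 * c * (c * T * ((2 ^+ 10 * c + 16) * Y)) =
     (2 ^+ 7 * c + 3 * 2 ^+ 13 * c ^+ 3 + 3 * 2 ^+ 7 * c ^+ 2) * (T * Y) by ring.
  have -> : 2 ^+ 15 * c ^+ 3 * Y * T = (2 ^+ 15 * c ^+ 3) * (T * Y) by ring.
  apply: ler_wpM2r => //.
  have c2 : c <= c ^+ 2 by nra.
  have c3 : c ^+ 2 <= c ^+ 3 by rewrite exprS; nra.
  have c3' : 0 <= c ^+ 3 by nra.
  nra.
have : ag <= 128 * c * T * Y + 24 * c * (c * T * ((2 ^+ 10 * c + 16) * Y)) by lra.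
move=> h; apply: le_trans h _; apply: le_trans fin _; apply: eqle; rewrite /Y; ring.
Qed.


Set Implicit Arguments. Unset Strict Implicit. Unset Printing Implicit Defensive.

Section Ar.
Variable R : realFieldType.
Implicit Types (x y a b B c T : R).

Lemma ar_E x a m1 m2 B : 0 <= a -> 0 <= m1 -> 0 <= m2 -> m1 <= B -> m2 <= B ->
  x <= 2 * (a * m1) + 2 * (m2 * a) -> x <= 4 * B * a.
Proof. move=> *; nra. Qed.

Lemma ar_W x aP fM1 fP2 av aF aE m2 c D2 L N :
  0 <= aP -> 0 <= fM1 -> 0 <= fP2 -> 0 <= av -> 0 <= aF -> 0 <= aE -> 0 <= D2 -> 0 <= L ->
  m2 ^+ 2 <= c -> aP <= 4 * aF -> aF <= m2 ^+ 2 * aE -> aE <= 4 * (4 * D2 * L) * av ->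
  fM1 <= 4 * D2 * L -> fP2 <= 4 * N ^+ 2 ->
  x <= 2 * (aP * fM1) + 2 * (fP2 * av) ->
  x <= av * (2 ^+ 9 * c * D2 ^+ 2 * L ^+ 2 + 8 * N ^+ 2).
Proof.
move=> aP0 fM0 fP0 av0 aF0 aE0 D0 L0 cm hP hF hE hM hPb hx.
have m0 : 0 <= m2 ^+ 2 by apply: sqr_ge0.
have DL0 : 0 <= D2 * L by apply: mulr_ge0.
have h1 : aF <= c * (16 * (D2 * L) * av).
  apply: le_trans hF _; apply: ler_pM => //; first by lra.
have h2 : aP * fM1 <= (4 * (c * (16 * (D2 * L) * av))) * (4 * D2 * L).
  apply: ler_pM => //; lra.
have h3 : fP2 * av <= 4 * N ^+ 2 * av by apply: ler_wpM2r.
apply: le_trans hx _.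
have -> : av * (2 ^+ 9 * c * D2 ^+ 2 * L ^+ 2 + 8 * N ^+ 2) =
  2 * ((4 * (c * (16 * (D2 * L) * av))) * (4 * D2 * L)) + 2 * (4 * N ^+ 2 * av) by ring.
lra.
Qed.

Lemma ar_y x fdC fW1 fC2 aW T D2 N L :
  0 <= fdC -> 0 <= fW1 -> 0 <= fC2 -> 0 <= aW ->
  fdC <= T -> fW1 <= 4 * N ^+ 2 * (4 * D2 * L) -> fC2 <= D2 ->
  x <= 2 * (fdC * fW1) + 2 * (fC2 * aW) ->
  x <= 32 * N ^+ 2 * D2 * L * T + 2 * D2 * aW.
Proof.
move=> a0 b0 c0 d0 h1 h2 h3 hx; apply: le_trans hx _.
have e1 : fdC * fW1 <= T * (4 * N ^+ 2 * (4 * D2 * L)) by apply: ler_pM.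
have e2 : fC2 * aW <= D2 * aW by apply: ler_wpM2r.
have -> : 32 * N ^+ 2 * D2 * L * T = 2 * (T * (4 * N ^+ 2 * (4 * D2 * L))) by ring.
lra.
Qed.

Lemma ar_g x asp fy1 ay s1 c N D2 L :
  0 <= asp -> 0 <= fy1 -> 0 <= ay -> s1 ^+ 2 <= c ->
  fy1 <= 16 * N ^+ 2 * D2 ^+ 2 * L ->
  x <= 2 * (asp * fy1) + 2 * (s1 ^+ 2 * ay) ->
  x <= 2 * asp * (16 * N ^+ 2 * D2 ^+ 2 * L) + 2 * c * ay.
Proof.
move=> a0 b0 c0 h1 h2 hx; apply: le_trans hx _.
have e1 : asp * fy1 <= asp * (16 * N ^+ 2 * D2 ^+ 2 * L) by apply: ler_wpM2l.
have e2 : s1 ^+ 2 * ay <= c * ay by apply: ler_wpM2r.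
lra.
Qed.

End Ar.

Set Implicit Arguments. Unset Strict Implicit. Unset Printing Implicit Defensive.

Lemma zid3 (V : zmodType) (a b c : V) : a - c = (a - b) + (b - c).
Proof. by rewrite addrA subrK. Qed.
Lemma zidv (V : zmodType) (a b c d1 d2 : V) : a + d1 - (c + d2) = (a - b) + (b - c) + (d1 - d2).
Proof. by rewrite -zid3 opprD addrACA. Qed.
Lemma zidS (V : zmodType) (x y w s : V) : (x - s) - (y - s) = (x - w) + (w - y).
Proof. by rewrite -zid3 opprB addrA subrK. Qed.
Lemma zidP (V : zmodType) (a b c d : V) : (a + c) - (b + d) = (a - b) + (c - d).
Proof. by rewrite opprD addrACA. Qed.

Section Main.
Variables (R : realType) (n k l : nat) (S : 'M[R]_n) (sigma mu : R -> R).

Definition z := hvec S.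
Definition uF (A : 'M[R]_(l, (n * n.+1)./2)) (b : 'cV[R]_l) := A *m z + b.
Definition sF A b := map_mx sigma (uF A b).
Definition vF A b (C : 'M[R]_(n * k, l)) (d : 'cV[R]_(n * k)) := C *m sF A b + d.
Definition MF A b C d := gmat (vF A b C d).
Definition FF A b C d := map_mx (derive1 mu) (MF A b C d *m (MF A b C d)^T - S).
Definition PF A b C d := FF A b C d + (FF A b C d)^T.
Definition WF A b C d := PF A b C d *m MF A b C d.
Definition yF A b C d := yv C (WF A b C d).
Definition spF A b := \col_i (derive1 sigma (uF A b i 0)).
Definition gF A b C d := \col_i (spF A b i 0 * yF A b C d i 0).

Lemma gradb_gF A b C d :
  (forall x, derivable sigma x 1) -> (forall x, derivable mu x 1) ->
  gradb S sigma mu A b C d = gF A b C d.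
Proof.
move=> ds dm; rewrite gradb_eq //; apply/matrixP => i j; rewrite !mxE.
by congr (_ * _); rewrite mxE.
Qed.


Variables (s1 s2 m2 D : R).
Hypothesis hsig : forall x, -1 <= sigma x <= 1.
Hypothesis dsig : forall x, derivable sigma x 1.
Hypothesis dsig2 : forall x, derivable (derive1 sigma) x 1.
Hypothesis hs1 : forall x, `|derive1 sigma x| <= s1.
Hypothesis hs2 : forall x, `|derive1 (derive1 sigma) x| <= s2.
Hypothesis dmu2 : forall x, derivable (derive1 mu) x 1.
Hypothesis hm1 : forall x, `|derive1 mu x| <= 1.
Hypothesis hm2 : forall x, `|derive1 (derive1 mu) x| <= m2.
Hypothesis l1 : (1 <= l)%N.

Lemma sq_lip (f : R -> R) c a b : `|f a - f b| <= c * `|a - b| -> 0 <= c ->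
  (f a - f b) ^+ 2 <= c ^+ 2 * (a - b) ^+ 2.
Proof.
move=> h c0; have := sq_le_abs h; by rewrite exprMn real_normK // num_real.
Qed.

Lemma pnorm_sq r m (A : 'M[R]_(l, r)) b (C : 'M[R]_(m, l)) d :
  pnorm A b C d ^+ 2 = fro2 A + fro2 b + fro2 C + fro2 d.
Proof. by rewrite /pnorm sqr_sqrtr // !addr_ge0 // fro2_ge0. Qed.

Lemma pt_bounds r m (A : 'M[R]_(l, r)) b (C : 'M[R]_(m, l)) d :
  pnorm A b C d <= D ->
  [/\ fro2 A <= D ^+ 2, fro2 b <= D ^+ 2, fro2 C <= D ^+ 2 & fro2 d <= D ^+ 2].
Proof.
move=> h; have h0 : 0 <= pnorm A b C d by apply: sqrtr_ge0.
have : pnorm A b C d ^+ 2 <= D ^+ 2 by nra.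
rewrite pnorm_sq.
have := fro2_ge0 A; have := fro2_ge0 b; have := fro2_ge0 C; have := fro2_ge0 d.
move=> *; split; lra.
Qed.

Lemma fro2_sF A b : fro2 (sF A b) <= l%:R.
Proof.
apply: le_trans (fro2_bound (c := 1) _) _.
  move=> i j; rewrite mxE ler_norml; exact: hsig.
by rewrite expr1n mul1r mulr1.
Qed.

Lemma fro2_vF A b C d : fro2 C <= D ^+ 2 -> fro2 d <= D ^+ 2 ->
  fro2 (vF A b C d) <= 4 * D ^+ 2 * l%:R.
Proof.
move=> hC hd; have L1 : 1 <= (l%:R : R) by rewrite ler1n.
apply: le_trans (fro2_add2 _ _) _.
have h1 := fro2_mul C (sF A b); have h2 := fro2_sF A b.
have := fro2_ge0 C; have := fro2_ge0 (sF A b).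
move=> *; nra.
Qed.

Lemma fro2_FF A b C d : fro2 (FF A b C d) <= n%:R ^+ 2.
Proof.
apply: le_trans (fro2_bound (c := 1) _) _.
  by move=> i j; rewrite mxE.
by rewrite expr1n mul1r expr2.
Qed.

Lemma fro2_PF A b C d : fro2 (PF A b C d) <= 4 * n%:R ^+ 2.
Proof.
apply: le_trans (fro2_add2 _ _) _; rewrite fro2_tr; have := fro2_FF A b C d; lra.
Qed.


Lemma mxEB p q (X Y : 'M[R]_(p, q)) i j : (X - Y) i j = X i j - Y i j.
Proof. by rewrite !mxE. Qed.

Lemma col_split p (a1 a2 y1 y2 : 'cV[R]_p) :
  \col_i (a1 i 0 * y1 i 0) - \col_i (a2 i 0 * y2 i 0) =
  \col_i ((a1 - a2) i 0 * y1 i 0) + \col_i (a2 i 0 * (y1 - y2) i 0).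
Proof. by apply/matrixP => i j; rewrite !mxE; ring. Qed.

Lemma s1_ge0 : 0 <= s1. Proof. exact: le_trans (normr_ge0 _) (hs1 0). Qed.
Lemma s2_ge0 : 0 <= s2. Proof. exact: le_trans (normr_ge0 _) (hs2 0). Qed.
Lemma m2_ge0 : 0 <= m2. Proof. exact: le_trans (normr_ge0 _) (hm2 0). Qed.

Lemma fro2_gmatB (v1 v2 : 'cV[R]_(n * k)) : gmat v1 - gmat v2 = gmat (v1 - v2).
Proof. by apply/matrixP => i j; rewrite !mxE getmxB. Qed.

Lemma trmxB' p q (X Y : 'M[R]_(p, q)) : X^T - Y^T = (X - Y)^T.
Proof. by apply/matrixP => i j; rewrite !mxE. Qed.

Lemma diff_bound A1 b1 C1 d1 A2 b2 C2 d2 (Mx : R) :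
  pnorm A1 b1 C1 d1 <= D -> pnorm A2 b2 C2 d2 <= D ->
  let T := pnorm (A1 - A2) (b1 - b2) (C1 - C2) (d1 - d2) ^+ 2 in
  let c := 1 + s1 ^+ 2 + s2 ^+ 2 + m2 ^+ 2 in
  let La := 1 + fro2 z in
  let L : R := l%:R in let N : R := n%:R in let D2 := D ^+ 2 in
  L * D2 * La <= Mx -> L ^+ 2 * D2 ^+ 3 * La <= Mx -> L ^+ 3 * D2 ^+ 2 <= Mx -> N * L <= Mx ->
  (1 <= n)%N ->
  fro2 (gF A1 b1 C1 d1 - gF A2 b2 C2 d2) <= 2 ^+ 15 * c ^+ 3 * (N ^+ 2 * D2 * Mx) * T.
Proof.
move=> h1 h2 T c La L N D2 f1 f2 f3 f4 n1.
have [hA1 hb1 hC1 hd1] := pt_bounds h1.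
have [hA2 hb2 hC2 hd2] := pt_bounds h2.
have hT : T = fro2 (A1 - A2) + fro2 (b1 - b2) + fro2 (C1 - C2) + fro2 (d1 - d2).
  by rewrite /T pnorm_sq.
have gA := fro2_ge0 (A1 - A2); have gb := fro2_ge0 (b1 - b2).
have gC := fro2_ge0 (C1 - C2); have gd := fro2_ge0 (d1 - d2).
have T0 : 0 <= T by lra.
have L1 : 1 <= L by rewrite ler1n.
have N1 : 1 <= N by rewrite ler1n.
have D20 : 0 <= D2 by apply: sqr_ge0.
have Z0 := fro2_ge0 z.
have La1 : 1 <= La by rewrite /La; lra.
have s10 := s1_ge0; have s20 := s2_ge0; have m20 := m2_ge0.
have cs1 : s1 ^+ 2 <= c by rewrite /c; have := sqr_ge0 s2; have := sqr_ge0 m2; lra.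
have cs2 : s2 ^+ 2 <= c by rewrite /c; have := sqr_ge0 s1; have := sqr_ge0 m2; lra.
have cm2 : m2 ^+ 2 <= c by rewrite /c; have := sqr_ge0 s1; have := sqr_ge0 s2; lra.
have c1 : 1 <= c by rewrite /c; have := sqr_ge0 s1; have := sqr_ge0 s2; have := sqr_ge0 m2; lra.
set du := uF A1 b1 - uF A2 b2.
have a_u : fro2 du <= 2 * T * La.
  rewrite /du /uF zidP -mulmxBl; apply: le_trans (fro2_add2 _ _) _.
  have := fro2_mul (A1 - A2) z; rewrite /La; nra.
have a_s : fro2 (sF A1 b1 - sF A2 b2) <= s1 ^+ 2 * fro2 du.
  apply: fro2_entry1 => i j; rewrite !mxE.
  apply: sq_lip; [exact: (lip_deriv dsig hs1) | exact: s10].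
pose dsp := spF A1 b1 - spF A2 b2.
have a_sp : fro2 dsp <= s2 ^+ 2 * fro2 du.
  apply: fro2_entry1 => i j; rewrite /dsp mxEB [spF A1 b1 i j]mxE [spF A2 b2 i j]mxE (ord1 j).
  rewrite [X in _ <= _ * X ^+ 2]mxEB.
  apply: sq_lip; [exact: (lip_deriv dsig2 hs2) | exact: s20].
have asp : fro2 dsp <= 2 * c * T * La.
  apply: le_trans a_sp _; have -> : 2 * c * T * La = c * (2 * T * La) by ring.
  apply: ler_pM; [exact: sqr_ge0 | exact: fro2_ge0 | exact: cs2 | exact: a_u].
pose dv := vF A1 b1 C1 d1 - vF A2 b2 C2 d2.
have a_v : fro2 dv <= 6 * c * T * (L + D2 * La).
  rewrite /dv /vF (zidv _ (C2 *m sF A1 b1)) -mulmxBl -mulmxBr.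
  apply: le_trans (fro2_add3 _ _ _) _.
  have m1 := fro2_mul (C1 - C2) (sF A1 b1); have m2' := fro2_mul C2 (sF A1 b1 - sF A2 b2).
  have hs := fro2_sF A1 b1.
  have gs := fro2_ge0 (sF A1 b1 - sF A2 b2).
  have gs1 := fro2_ge0 (sF A1 b1).
  have gC2 := fro2_ge0 C2.
  have e1 : fro2 ((C1 - C2) *m sF A1 b1) <= T * L.
    apply: le_trans m1 _; apply: ler_pM; [exact: fro2_ge0 | exact: gs1 | lra | exact: hs].
  have e2 : fro2 (C2 *m (sF A1 b1 - sF A2 b2)) <= D2 * (c * (2 * T * La)).
    apply: le_trans m2' _; apply: ler_pM; [exact: gC2 | exact: gs | exact: hC2 | ].
    apply: le_trans a_s _; apply: ler_pM; [exact: sqr_ge0 | exact: fro2_ge0 | exact: cs1 | exact: a_u].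
  have e3 : fro2 (d1 - d2) <= T by lra.
  have TL : T <= T * L by rewrite ler_peMr.
  have TL0 : 0 <= T * L by apply: mulr_ge0; [exact: T0 | lra].
  have cTL : T * L <= c * (T * L) by rewrite ler_peMl.
  have : 3 * (T * L) + 3 * (D2 * (c * (2 * T * La))) + 3 * T <= 6 * c * T * (L + D2 * La).
    have -> : 6 * c * T * (L + D2 * La) = 6 * (c * (T * L)) + 3 * (D2 * (c * (2 * T * La))) by ring.
    lra.
  lra.
have fM : fro2 (MF A1 b1 C1 d1 - MF A2 b2 C2 d2) = fro2 dv by rewrite /MF fro2_gmatB fro2_gmat.
have hM1 : fro2 (MF A1 b1 C1 d1) <= 4 * D2 * L by rewrite /MF fro2_gmat; exact: fro2_vF hC1 hd1.
have hM2 : fro2 (MF A2 b2 C2 d2) <= 4 * D2 * L by rewrite /MF fro2_gmat; exact: fro2_vF hC2 hd2.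
have gM1 := fro2_ge0 (MF A1 b1 C1 d1); have gM2 := fro2_ge0 (MF A2 b2 C2 d2).
have gv := fro2_ge0 dv.
pose E1 := MF A1 b1 C1 d1 *m (MF A1 b1 C1 d1)^T - S.
pose E2 := MF A2 b2 C2 d2 *m (MF A2 b2 C2 d2)^T - S.
have a_E : fro2 (E1 - E2) <= 4 * (4 * D2 * L) * fro2 dv.
  have eE : E1 - E2 = (MF A1 b1 C1 d1 - MF A2 b2 C2 d2) *m (MF A1 b1 C1 d1)^T +
       MF A2 b2 C2 d2 *m (MF A1 b1 C1 d1 - MF A2 b2 C2 d2)^T.
    by rewrite /E1 /E2 (zidS _ _ (MF A2 b2 C2 d2 *m (MF A1 b1 C1 d1)^T)) mulmxBl -trmxB' mulmxBr.
  rewrite eE; apply: (ar_E gv gM1 gM2 hM1 hM2).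
  apply: le_trans (fro2_add2 _ _) _.
  have p1 := fro2_mul (MF A1 b1 C1 d1 - MF A2 b2 C2 d2) (MF A1 b1 C1 d1)^T.
  have p2 := fro2_mul (MF A2 b2 C2 d2) (MF A1 b1 C1 d1 - MF A2 b2 C2 d2)^T.
  rewrite !fro2_tr fM in p1 p2.
  apply: lerD; apply: ler_wpM2l => //.
have a_F : fro2 (FF A1 b1 C1 d1 - FF A2 b2 C2 d2) <= m2 ^+ 2 * fro2 (E1 - E2).
  apply: fro2_entry1 => i j; rewrite mxEB [FF A1 b1 C1 d1 i j]mxE [FF A2 b2 C2 d2 i j]mxE.
  rewrite [X in _ <= _ * X ^+ 2]mxEB.
  apply: sq_lip; [exact: (lip_deriv dmu2 hm2) | exact: m20].
have a_P : fro2 (PF A1 b1 C1 d1 - PF A2 b2 C2 d2) <= 4 * fro2 (FF A1 b1 C1 d1 - FF A2 b2 C2 d2).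
  rewrite /PF zidP trmxB'; apply: le_trans (fro2_add2 _ _) _; rewrite fro2_tr; lra.
have hP2 := fro2_PF A2 b2 C2 d2; have hP1 := fro2_PF A1 b1 C1 d1.
have a_W : fro2 (WF A1 b1 C1 d1 - WF A2 b2 C2 d2) <=
    fro2 dv * (2 ^+ 9 * c * D2 ^+ 2 * L ^+ 2 + 8 * N ^+ 2).
  apply: (ar_W _ _ _ gv _ _ D20 _ cm2 a_P a_F a_E hM1 hP2).
  - exact: fro2_ge0.
  - exact: gM1.
  - exact: fro2_ge0.
  - exact: fro2_ge0.
  - exact: fro2_ge0.
  - exact: (le_trans ler01 L1).
  have eW : WF A1 b1 C1 d1 - WF A2 b2 C2 d2 =
    (PF A1 b1 C1 d1 - PF A2 b2 C2 d2) *m MF A1 b1 C1 d1 + PF A2 b2 C2 d2 *m (MF A1 b1 C1 d1 - MF A2 b2 C2 d2).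
    by rewrite mulmxBl mulmxBr addrA subrK.
  rewrite eW.
  apply: le_trans (fro2_add2 _ _) _.
  have p1 := fro2_mul (PF A1 b1 C1 d1 - PF A2 b2 C2 d2) (MF A1 b1 C1 d1).
  have p2 := fro2_mul (PF A2 b2 C2 d2) (MF A1 b1 C1 d1 - MF A2 b2 C2 d2).
  rewrite fM in p2.
  apply: lerD; apply: ler_wpM2l => //.
have hW1 : fro2 (WF A1 b1 C1 d1) <= 4 * N ^+ 2 * (4 * D2 * L).
  apply: le_trans (fro2_mul _ _) _.
  apply: ler_pM; [exact: fro2_ge0 | exact: gM1 | exact: hP1 | exact: hM1].
have hdC : fro2 (C1 - C2) <= T by rewrite hT; lra.
have a_y : fro2 (yF A1 b1 C1 d1 - yF A2 b2 C2 d2) <=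
    32 * N ^+ 2 * D2 * L * T + 2 * D2 * fro2 (WF A1 b1 C1 d1 - WF A2 b2 C2 d2).
  apply: (ar_y gC _ (fro2_ge0 C2) _ hdC hW1 hC2).
  - exact: fro2_ge0.
  - exact: fro2_ge0.
  rewrite /yF yvB; apply: le_trans (fro2_add2 _ _) _.
  apply: lerD; apply: ler_wpM2l; [exact: ler0n | exact: fro2_yv | exact: ler0n | exact: fro2_yv].
have hsp2 : forall i, `|spF A2 b2 i 0| <= s1 by move=> i; rewrite mxE; exact: hs1.
have hy1 : fro2 (yF A1 b1 C1 d1) <= 16 * N ^+ 2 * D2 ^+ 2 * L.
  apply: le_trans (fro2_yv _ _) _.
  have -> : 16 * N ^+ 2 * D2 ^+ 2 * L = D2 * (4 * N ^+ 2 * (4 * D2 * L)) by ring.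
  apply: ler_pM; [exact: fro2_ge0 | exact: fro2_ge0 | exact: hC1 | exact: hW1].
have a_g : fro2 (gF A1 b1 C1 d1 - gF A2 b2 C2 d2) <=
    2 * fro2 dsp * (16 * N ^+ 2 * D2 ^+ 2 * L) + 2 * c * fro2 (yF A1 b1 C1 d1 - yF A2 b2 C2 d2).
  apply: (ar_g (fro2_ge0 dsp) (fro2_ge0 _) (fro2_ge0 _) cs1 hy1).
  rewrite /gF col_split; apply: le_trans (fro2_add2 _ _) _.
  apply: lerD; apply: ler_wpM2l; [exact: ler0n | exact: fro2_had | exact: ler0n | ].
  exact: (fro2_had_bound (yF A1 b1 C1 d1 - yF A2 b2 C2 d2) hsp2).
exact: (final_arith T0 L1 N1 D20 La1 c1 f1 f2 f3 f4 asp a_v a_W a_y a_g).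
Qed.

End Main.

Unset Implicit Arguments. Set Strict Implicit.

Theorem lemma4 (R : realType) :
  exists P : {poly {poly {poly R}}},
  forall (n k l : nat) (S : 'M[R]_n) (sigma mu : R -> R)
         (s1max s2max m2max D : R),
    (1 <= n)%N -> (1 <= k)%N -> (k <= n)%N -> (1 <= l)%N ->
    S^T = S ->
    (forall x, -1 <= sigma x <= 1) ->
    (forall x, derivable sigma x 1) ->
    (forall x, derivable (derive1 sigma) x 1) ->
    0 < s1max ->
    (forall x, `|derive1 sigma x| <= s1max) ->
    (forall x, `|derive1 (derive1 sigma) x| <= s2max) ->
    smooth mu ->
    (forall x, `|derive1 mu x| <= 1) ->
    (forall x, `|derive1 (derive1 mu) x| <= m2max) ->
    0 < D ->
    let Cb := eval3 P s1max s2max m2max in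
    let LZ := Num.sqrt (1 + normS S ^+ 2) in
    let Lb := Num.sqrt (Cb * (n%:R ^+ 2) * D ^+ 2 *
                Num.max (Num.max (l%:R * D ^+ 2 * LZ ^+ 2)
                                 (l%:R ^+ 2 * D ^+ 6 * LZ ^+ 2))
                        (Num.max (l%:R ^+ 3 * D ^+ 4) (n%:R * l%:R))) in
    0 <= Cb /\
    forall (A1 A2 : 'M[R]_(l, (n * n.+1)./2)) (b1 b2 : 'cV[R]_l)
           (C1 C2 : 'M[R]_(n * k, l)) (d1 d2 : 'cV[R]_(n * k)),
      pnorm A1 b1 C1 d1 <= D -> pnorm A2 b2 C2 d2 <= D ->
      vnorm (@gradb R n k l S sigma mu A1 b1 C1 d1 - @gradb R n k l S sigma mu A2 b2 C2 d2)
        <= Lb * pnorm (A1 - A2) (b1 - b2) (C1 - C2) (d1 - d2).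
Proof.
exists (Pc (2 ^+ 15)).
move=> n k l S sigma mu s1 s2 m2 D n1 k1 kn l1 hST hsig dsig dsig2 s1p hs1 hs2 smu hm1 hm2 D0.
move=> Cb LZ Lb.
pose c := 1 + s1 ^+ 2 + s2 ^+ 2 + m2 ^+ 2.
have eCb : Cb = 2 ^+ 15 * c ^+ 3 by rewrite /Cb eval3_Pc.
have c0 : 0 <= c by rewrite /c; have := sqr_ge0 s1; have := sqr_ge0 s2; have := sqr_ge0 m2; lra.
have Cb0 : 0 <= Cb by rewrite eCb; apply: mulr_ge0; [exact: exprn_ge0 | exact: exprn_ge0].
split; first exact: Cb0.
move=> A1 A2 b1 b2 C1 C2 d1 d2 h1 h2.
have dmu : forall x, derivable mu x 1 by move=> x; exact: (smu 0%N x).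
have dmu2 : forall x, derivable (derive1 mu) x 1 by move=> x; exact: (smu 1%N x).
rewrite !gradb_gF //.
pose L : R := l%:R; pose N : R := n%:R; pose D2 := D ^+ 2.
pose La := 1 + fro2 (z S).
have eLZ : LZ ^+ 2 = La.
  rewrite /LZ /La sqr_sqrtr; last by apply: addr_ge0; [exact: ler01 | exact: sqr_ge0].
  by rewrite /normS sqr_sqrtr //; exact: fro2_ge0.
pose Mx := Num.max (Num.max (L * D2 * La) (L ^+ 2 * D2 ^+ 3 * La))
                   (Num.max (L ^+ 3 * D2 ^+ 2) (N * L)).
have eMx : Num.max (Num.max (l%:R * D ^+ 2 * LZ ^+ 2) (l%:R ^+ 2 * D ^+ 6 * LZ ^+ 2))
                   (Num.max (l%:R ^+ 3 * D ^+ 4) (n%:R * l%:R)) = Mx.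
  by rewrite /Mx eLZ /D2 -!exprM.
have f1 : L * D2 * La <= Mx by rewrite /Mx !le_max lexx.
have f2 : L ^+ 2 * D2 ^+ 3 * La <= Mx by rewrite /Mx !le_max lexx !orbT.
have f3 : L ^+ 3 * D2 ^+ 2 <= Mx by rewrite /Mx !le_max lexx !orbT.
have f4 : N * L <= Mx by rewrite /Mx !le_max lexx !orbT.
have hb := diff_bound hsig dsig dsig2 hs1 hs2 dmu2 hm1 hm2 l1 h1 h2 f1 f2 f3 f4 n1.
set p := pnorm (A1 - A2) (b1 - b2) (C1 - C2) (d1 - d2) in hb *.
have p0 : 0 <= p by apply: sqrtr_ge0.
rewrite /Lb eMx /vnorm.
have X0 : 0 <= Cb * n%:R ^+ 2 * D ^+ 2 * Mx.
  apply: mulr_ge0; last by apply: le_trans f4; apply: mulr_ge0; exact: ler0n.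
  apply: mulr_ge0; [apply: mulr_ge0; [exact: Cb0 | exact: exprn_ge0] | exact: sqr_ge0].
have ep : p = Num.sqrt (p ^+ 2) by rewrite sqrtr_sqr ger0_norm.
rewrite [X in _ <= _ * X]ep -sqrtrM //.
rewrite ler_sqrt; last by apply: mulr_ge0 => //; exact: sqr_ge0.
apply: le_trans hb _; rewrite eCb /c /N /D2 le_eqVlt; apply/orP; left; apply/eqP; ring.
Qed.
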